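(* Consider the $[\![15,7,3]\!]$ Hamming code and the qubit permutation $\sigma_3 = (1,10,15,3,8,13)(4,6)(5,12,11)(7,14,9)$. Let $U = \prod_{i:\,\sigma_3(i)\ne i}\mathrm{CZ}_{i,\sigma_3(i)}$ (so the two gates from the 2-cycle $(4,6)$ cancel). Then there is a product $P$ of Pauli $Z$ operators such that $PU$ preserves the code space, and, up to a logical Pauli operator and global phase, $PU$ acts on the code space as the product of logical $\mathrm{CZ}$ gates $\overline{\mathrm{CZ}}_{2,3}\overline{\mathrm{CZ}}_{3,4}\overline{\mathrm{CZ}}_{4,5}\overline{\mathrm{CZ}}_{5,6}\overline{\mathrm{CZ}}_{6,7}\overline{\mathrm{CZ}}_{7,2}$ (logical $\mathrm{CZ}$ gates following the cycle $(2,3,4,5,6,7)$, with logical qubit 1 untouched).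
   Context: The $[\![15,7,3]\!]$ Hamming code: index physical qubits $1,\dots,15$, and for $b\in\{1,2,4,8\}$ let $R_b = \{i\in\{1,\dots,15\} : \text{the binary expansion of } i \text{ contains } b\}$. The stabilizer group is generated by $X_{R_b}$ and $Z_{R_b}$, $b\in\{1,2,4,8\}$. Logical operators are $\bar X_j = X_{T_j}$, $\bar Z_j = Z_{T_j}$ with $T_1=\{1,2,4,8,15\}$, $T_2=\{1,2,5,10,12\}$, $T_3=\{1,2,6,11,14\}$, $T_4=\{1,2,7,9,13\}$, $T_5=\{1,4,6,9,10\}$, $T_6=\{1,4,7,12,14\}$, $T_7=\{1,8,10,13,14\}$. $\mathrm{CZ}_{a,b} = \mathbb 1 - 2|11\rangle\langle 11|$ on qubits $a,b$. *)

(* Defs.v *)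
From HB Require Import structures.
From mathcomp Require Import all_boot all_order all_algebra all_field.
Set Implicit Arguments. Unset Strict Implicit. Unset Printing Implicit Defensive.
Import GRing.Theory Num.Theory.
Local Open Scope ring_scope.

(* Physical qubit k (1 <= k <= 15) is the ordinal (k-1 : 'I_15);
   logical qubit j (1 <= j <= 7) is the ordinal (j-1 : 'I_7). *)
Definition bits := {ffun 'I_15 -> bool}.
Definition state := {ffun bits -> algC}.
Definition op := state -> state.

Definition pq (k : nat) : 'I_15 := inord k.-1.
Definition lq (j : nat) : 'I_7 := inord j.-1.

Definition flip (A : {set 'I_15}) (x : bits) : bits := [ffun i => x i (+) (i \in A)].
Definition Xop (A : {set 'I_15}) : op := fun psi => [ffun x : bits => psi (flip A x)].
Definition Zop (A : {set 'I_15}) : op :=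
  fun psi => [ffun x : bits => (-1) ^+ #|[set i in A | x i]| * psi x].
Definition CZop (a b : 'I_15) : op :=
  fun psi => [ffun x : bits => (if x a && x b then -1 else 1) * psi x].

Definition scale (c : algC) : op := fun psi => [ffun x : bits => c * psi x].
Definition addop (f g : op) : op := fun psi => [ffun x : bits => f psi x + g psi x].

(* R_b = { i in 1..15 | binary expansion of i contains b } *)
Definition Rset (b : nat) : {set 'I_15} := [set i : 'I_15 | odd (i.+1 %/ b)%N].

Definition in_code (psi : state) : Prop :=
  forall b, b \in [:: 1; 2; 4; 8]%N -> Xop (Rset b) psi = psi /\ Zop (Rset b) psi = psi.

Definition Tlist (j : nat) : seq nat :=
  match j with
  | 1 => [:: 1; 2; 4; 8; 15]
  | 2 => [:: 1; 2; 5; 10; 12]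
  | 3 => [:: 1; 2; 6; 11; 14]
  | 4 => [:: 1; 2; 7; 9; 13]
  | 5 => [:: 1; 4; 6; 9; 10]
  | 6 => [:: 1; 4; 7; 12; 14]
  | 7 => [:: 1; 8; 10; 13; 14]
  | _ => [::]
  end%N.
Definition Tset (j : 'I_7) : {set 'I_15} := [set i : 'I_15 | (i.+1 \in Tlist j.+1)%N].

Definition logX (j : 'I_7) : op := Xop (Tset j).
Definition logZ (j : 'I_7) : op := Zop (Tset j).

Definition lpauli (ax az : {set 'I_7}) : op :=
  foldr (fun j f => fun psi =>
           (if j \in ax then logX j else id) ((if j \in az then logZ j else id) (f psi)))
        id (enum 'I_7).

Definition logCZ (a b : 'I_7) : op := fun psi =>
  [ffun x : bits => 2^-1 * (psi x + logZ a psi x + logZ b psi x - logZ a (logZ b psi) x)].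

Definition targetCZ : op := fun psi =>
  logCZ (lq 2) (lq 3) (logCZ (lq 3) (lq 4) (logCZ (lq 4) (lq 5)
    (logCZ (lq 5) (lq 6) (logCZ (lq 6) (lq 7) (logCZ (lq 7) (lq 2) psi))))).

Definition sig3_nat (n : nat) : nat :=
  match n with
  | 1 => 10 | 10 => 15 | 15 => 3 | 3 => 8 | 8 => 13 | 13 => 1
  | 4 => 6 | 6 => 4
  | 5 => 12 | 12 => 11 | 11 => 5
  | 7 => 14 | 14 => 9 | 9 => 7
  | k => k
  end%N.
Definition sigma3 (i : 'I_15) : 'I_15 := pq (sig3_nat i.+1).

Definition Uop : op := fun psi =>
  [ffun x : bits => (\prod_(i : 'I_15 | sigma3 i != i)
                (if x i && x (sigma3 i) then -1 else 1)) * psi x].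

(* Main.v *)
Require Import Defs.
From mathcomp Require Import all_boot all_order all_algebra all_field ring.

Definition memA (k : nat) : bool := k.+1 \in [:: 1; 3; 4; 5; 6; 7]%N.
Definition memT (j k : nat) : bool := k.+1 \in Tlist j.
Definition memR (b k : nat) : bool := odd (k.+1 %/ b).
Definition memU (k : nat) : bool := (sig3_nat k.+1).-1 != k.
Definition par (m : nat -> bool) (l : seq bool) : bool :=
  odd (sumn [seq (m k && nth false l k : nat) | k <- iota 0 15]).
Definition phU (l : seq bool) : bool :=
  odd (sumn [seq (memU k && nth false l k && nth false l (sig3_nat k.+1).-1 : nat) | k <- iota 0 15]).
Definition phL (l : seq bool) : bool := odd (par memA l + phU l).
Definition phT (l : seq bool) : bool :=
  let t j := par (memT j) l in
  odd ((t 2 && t 3 : nat) + (t 3 && t 4 : nat) + (t 4 && t 5 : nat) + (t 5 && t 6 : nat)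
       + (t 6 && t 7 : nat) + (t 7 && t 2 : nat))%N.
Definition inCl (l : seq bool) : bool := all (fun b => ~~ par (memR b) l) [:: 1; 2; 4; 8]%N.
Definition flipl (b : nat) (l : seq bool) : seq bool :=
  [seq nth false l k (+) memR b k | k <- iota 0 15].
Definition Pl (l : seq bool) : bool :=
  inCl l ==> (phL l == phT l) && all (fun b => phL (flipl b l) == phL l) [:: 1; 2; 4; 8]%N.
Fixpoint chk (n : nat) (l : seq bool) : bool :=
  match n with 0 => Pl l | n'.+1 => chk n' (true :: l) && chk n' (false :: l) end.
Lemma chk15 : chk 15 [::]. Proof. vm_compute. reflexivity. Qed.

Lemma chkP n l : chk n l -> forall l', size l' = n -> Pl (l' ++ l).
Proof.
elim: n l => [|n IH] l /=.
  by move=> h [|//] _.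
move=> /andP[h1 h2] l'; case/lastP: l' => [//|l' a]; rewrite size_rcons => -[hs].
rewrite cat_rcons; case: a; [exact: IH h1 _ hs | exact: IH h2 _ hs].
Qed.

Import GRing.Theory Num.Theory.
Local Open Scope ring_scope.

Definition lx (x : bits) : seq bool := [seq x i | i <- enum 'I_15].

Lemma size_lx x : size (lx x) = 15%N.
Proof. by rewrite size_map size_enum_ord. Qed.

Lemma nth_lx x (i : 'I_15) : nth false (lx x) i = x i.
Proof. by rewrite (nth_map i) ?size_enum_ord // nth_ord_enum. Qed.

Lemma Pl_lx x : Pl (lx x).
Proof. by have := @chkP _ _ chk15 _ (size_lx x); rewrite cats0. Qed.

Lemma sum15 (F : nat -> nat) : (\sum_(i < 15) F i)%N = sumn [seq F k | k <- iota 0 15].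
Proof. by rewrite -(big_mkord xpredT F) sumnE big_map. Qed.

Lemma cnt_par (S : {set 'I_15}) (m : nat -> bool) (x : bits) :
  (forall i : 'I_15, (i \in S) = m i) -> odd #|[set i in S | x i]| = par m (lx x).
Proof.
move=> H; rewrite -sum1_card big_mkcond /=.
rewrite (eq_bigr (fun i : 'I_15 => (m i && nth false (lx x) i : nat))).
  by rewrite (sum15 (fun k => (m k && nth false (lx x) k : nat))).
by move=> i _; rewrite inE H nth_lx; case: (m i && x i).
Qed.

Lemma ZopE (S : {set 'I_15}) (m : nat -> bool) phi :
  (forall i : 'I_15, (i \in S) = m i) ->
  Zop S phi = [ffun x => (-1) ^+ par m (lx x) * phi x].
Proof.
move=> H; apply/ffunP => x; rewrite !ffunE -signr_odd.
by rewrite (cnt_par _ _ x H).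
Qed.

Lemma sig_bound (i : 'I_15) : ((sig3_nat i.+1).-1 < 15)%N.
Proof. by case: i => n; do 15?[case: n => [|n] //]. Qed.

Lemma UopE psi : Uop psi = [ffun x => (-1) ^+ phU (lx x) * psi x].
Proof.
apply/ffunP => x; rewrite !ffunE; congr (_ * _).
rewrite (eq_bigr (fun i => (-1) ^+ (x i && x (sigma3 i) : nat))); last first.
  by move=> i _; case: (_ && _).
rewrite prodrXr -signr_odd; congr (_ ^+ (odd _)).
rewrite big_mkcond /=.
rewrite (eq_bigr (fun i : 'I_15 => (memU i && nth false (lx x) i
          && nth false (lx x) (sig3_nat i.+1).-1 : nat))).
  by rewrite (sum15 (fun k => (memU k && nth false (lx x) k
          && nth false (lx x) (sig3_nat k.+1).-1 : nat))).
move=> i _.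
have hv : nat_of_ord (sigma3 i) = (sig3_nat i.+1).-1 by rewrite /sigma3 /pq inordK // sig_bound.
have -> : (sigma3 i != i) = memU i by rewrite /memU -hv.
by rewrite -hv !nth_lx; case: (memU i).
Qed.

Lemma two_neq0 : (2 : algC) != 0.
Proof. by rewrite pnatr_eq0. Qed.

Lemma logCZE (a b : 'I_7) phi :
  logCZ a b phi = [ffun x => (-1) ^+ (par (memT a.+1) (lx x) && par (memT b.+1) (lx x) : nat) * phi x].
Proof.
apply/ffunP => x; rewrite /logCZ /logZ.
have Ha : forall i : 'I_15, (i \in Tset a) = memT a.+1 i by move=> i; rewrite inE.
have Hb : forall i : 'I_15, (i \in Tset b) = memT b.+1 i by move=> i; rewrite inE.
rewrite !(ZopE _ _ _ Ha) !(ZopE _ _ _ Hb) !ffunE.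
case: (par _ _); case: (par _ _); rewrite /= ?expr0 ?expr1;
  by field.
Qed.

Lemma lpauli0 phi : lpauli set0 set0 phi = phi.
Proof. by rewrite /lpauli; elim: (enum 'I_7) => //= j s ->; rewrite !inE. Qed.

Lemma targetE psi : targetCZ psi = [ffun x => (-1) ^+ phT (lx x) * psi x].
Proof.
apply/ffunP => x; rewrite /targetCZ !logCZE !ffunE !mulrA -!exprD -signr_odd.
have v : forall k, (0 < k <= 7)%N -> (lq k).+1 = k.
  by move=> k /andP[k0 k7]; rewrite /lq inordK; [rewrite prednK | rewrite prednK].
by rewrite !v.
Qed.

Definition Aset : {set 'I_15} := [set i : 'I_15 | memA i].

Lemma LHSE psi : Zop Aset (Uop psi) = [ffun x => (-1) ^+ phL (lx x) * psi x].
Proof.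
have HA : forall i : 'I_15, (i \in Aset) = memA i by move=> i; rewrite inE.
apply/ffunP => x; rewrite (ZopE _ _ _ HA) UopE !ffunE mulrA -exprD signr_odd.
by rewrite /phL.
Qed.

Lemma notC_zero psi x : in_code psi -> ~~ inCl (lx x) -> psi x = 0.
Proof.
move=> Hc /allPn [b hb /negbNE hp].
have HR : forall i : 'I_15, (i \in Rset b) = memR b i by move=> i; rewrite inE.
have := congr1 (fun f : state => f x) (Hc b hb).2.
rewrite (ZopE _ _ _ HR) ffunE hp expr1 mulN1r => E.
have : psi x *+ 2 = 0 by rewrite mulr2n -{1}E addNr.
by move/eqP; rewrite mulrn_eq0 /= => /eqP.
Qed.

Lemma lx_flip b x : lx (flip (Rset b) x) = flipl b (lx x).
Proof.
apply: (@eq_from_nth _ false); first by rewrite size_lx size_map size_iota.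
rewrite size_lx => k hk.
rewrite (nth_map 0%N) ?size_iota // nth_iota // add0n.
by rewrite -[k]/(nat_of_ord (Ordinal hk)) !nth_lx ffunE inE.
Qed.

Theorem mainTheorem9 :
  exists (A : {set 'I_15}) (ax az : {set 'I_7}) (c : algC),
    `|c| = 1 /\
    (forall psi : state, in_code psi -> in_code (Zop A (Uop psi))) /\
    (forall psi : state, in_code psi ->
       Zop A (Uop psi) = scale c (lpauli ax az (targetCZ psi))).
Proof.
exists Aset, set0, set0, 1; split; first by rewrite normr1.
split.
  move=> psi Hc b hb; have [hX hZ] := Hc b hb; split.
    apply/ffunP => x; rewrite /Xop LHSE !ffunE lx_flip.
    have -> : psi (flip (Rset b) x) = psi x.
      by have := congr1 (fun f : state => f x) hX; rewrite /Xop ffunE.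
    case hC: (inCl (lx x)); last by rewrite (@notC_zero _ x Hc) ?hC ?mulr0.
    have := Pl_lx x; rewrite /Pl hC implyTb => /andP[_ /allP Hall].
    by have /eqP -> := Hall b hb.
  apply/ffunP => x; rewrite LHSE /Zop !ffunE mulrCA; congr (_ * _).
  by have := congr1 (fun f : state => f x) hZ; rewrite /Zop ffunE.
move=> psi Hc; rewrite lpauli0 LHSE targetE; apply/ffunP => x; rewrite !ffunE mul1r.
case hC: (inCl (lx x)); last by rewrite (@notC_zero _ x Hc) ?hC ?mulr0.
by have := Pl_lx x; rewrite /Pl hC implyTb => /andP[/eqP -> _].
Qed.
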